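(* Let $a,b\ge1$ and $P=[a]\times[b]$. Then $\sum_{p\in P}T_p^-\equiv^q \frac{[a]_q[b]_q}{[a+b]_q}$.
   Context: $[a]\times[b]=\{(i,j)\colon1\le i\le a,1\le j\le b\}$ with $(i,j)\le(i',j')$ iff $i\le i'$ and $j\le j'$. $\mathcal{J}(P)$ is the set of order ideals. For $p\in P$, $I\in\mathcal{J}(P)$: $T_p^+(I)=1$ if $p$ is minimal in $P\setminus I$, else $0$; $T_p^-(I)=1$ if $p$ is maximal in $I$, else $0$; $T_p^q=T_p^+-qT_p^-$ with $q$ an indeterminate. For $f,g\colon\mathcal{J}(P)\to\mathbb{R}(q)$, $f\equiv^q g$ means $f-g=\sum_{p\in P}c_p(q)T_p^q$ for some $c_p(q)\in\mathbb{R}(q)$; an element of $\mathbb{R}(q)$ denotes a constant function. $[m]_q=1+q+\dots+q^{m-1}$. *)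

(* Defs.v *)
From HB Require Import structures.
From mathcomp Require Import all_boot all_order all_algebra.
From mathcomp Require Import fraction.
From mathcomp Require Import reals.
Set Implicit Arguments. Unset Strict Implicit. Unset Printing Implicit Defensive.
Import Order.TTheory GRing.Theory Num.Theory.
Local Open Scope ring_scope.

Definition ratfun (R : realType) := {fraction {poly R}}.
Definition qvar (R : realType) : ratfun R := tofrac ('X : {poly R}).

Definition qint (R : realType) (m : nat) : ratfun R := \sum_(i < m) (qvar R) ^+ i.

(* The poset [a] x [b], encoded 0-indexed as 'I_a * 'I_b, product order. *)
Definition gridP (a b : nat) := ('I_a * 'I_b)%type.
Definition grid_le (a b : nat) (x y : gridP a b) : bool :=
  ((x.1 <= y.1)%N && (x.2 <= y.2)%N).

Section Toggles.
Variables (T : finType) (le : rel T) (K : fieldType).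

Definition is_ideal (I : {set T}) : bool :=
  [forall x, forall y, ((y \in I) && le x y) ==> (x \in I)].

Definition lt_ (x y : T) : bool := (x != y) && le x y.

Definition Tplus (p : T) (I : {set T}) : K :=
  ((p \notin I) && [forall y, (y \notin I) ==> ~~ lt_ y p])%:R.

Definition Tminus (p : T) (I : {set T}) : K :=
  ((p \in I) && [forall y, (y \in I) ==> ~~ lt_ p y])%:R.

Definition Tq (q : K) (p : T) (I : {set T}) : K := Tplus p I - q * Tminus p I.

Definition qequiv (q : K) (f g : {set T} -> K) : Prop :=
  exists c : T -> K, forall I : {set T}, is_ideal I ->
    f I - g I = \sum_(p : T) c p * Tq q p I.
End Toggles.

(* Main.v *)
Require Import Defs.
From HB Require Import structures.
From mathcomp Require Import all_boot all_order all_algebra.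
From mathcomp Require Import fraction.
From mathcomp Require Import reals.
From mathcomp Require Import ring.
Import Order.TTheory GRing.Theory Num.Theory.
Local Open Scope ring_scope.

Section Comb.
Variables (a b : nat) (I : {set gridP a b}).
Hypothesis hI : is_ideal (@grid_le a b) I.

Lemma idealP (x y : gridP a b) : y \in I -> grid_le x y -> x \in I.
Proof. move=> yI lxy; have := hI; move/forallP/(_ x)/forallP/(_ y). by rewrite yI lxy. Qed.

Definition lamn (i : nat) : nat := (\max_(p in I | (p.1 : nat) == i) p.2.+1)%N.
Definition Lb (i : nat) : nat := if i is i'.+1 then lamn i' else b.

Lemma memI (p : gridP a b) : (p \in I) = (p.2 < lamn p.1)%N.
Proof.
apply/idP/idP => [pI|].
  by apply: (leq_bigmax_cond p); rewrite pI eqxx.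
apply: contraLR => pnI; rewrite -leqNgt; apply/bigmax_leqP => y /andP[yI /eqP y1].
rewrite ltnNge; apply/negP => hle.
have : p \in I by apply: (idealP _ _ yI); rewrite /grid_le y1 leqnn hle.
by rewrite (negbTE pnI).
Qed.

Lemma lam_le_b i : (lamn i <= b)%N.
Proof. by apply/bigmax_leqP => y _; exact: ltn_ord. Qed.

Lemma lam_ge_a i : (a <= i)%N -> lamn i = 0%N.
Proof.
move=> hai; apply/eqP; rewrite -leqn0; apply/bigmax_leqP => y /andP[_ /eqP y1].
by have := ltn_ord y.1; rewrite y1 ltnNge hai.
Qed.

Lemma lam_mono i i' : (i <= i')%N -> (lamn i' <= lamn i)%N.
Proof.
move=> hii; apply/bigmax_leqP => y /andP[yI /eqP y1].
have ia : (i < a)%N by apply: leq_ltn_trans hii _; rewrite -y1 ltn_ord.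
have := memI (Ordinal ia, y.2) => /= <-.
by apply: (idealP _ _ yI); rewrite /grid_le /= y1 hii leqnn.
Qed.

Lemma ltP' (x y : gridP a b) : grid_le x y -> ((x.1 < y.1) || (x.2 < y.2))%N -> lt_ (@grid_le a b) x y.
Proof. move=> hle h; rewrite /lt_ hle andbT; apply/eqP => exy; move: h; by rewrite exy !ltnn. Qed.

Lemma TmE (p : gridP a b) :
  ((p \in I) && [forall y, (y \in I) ==> ~~ lt_ (@grid_le a b) p y])
  = ((p.2.+1 == lamn p.1) && (lamn p.1.+1 < lamn p.1))%N.
Proof.
case: p => i j /=; apply/andP/andP.
  rewrite memI /= => -[pI /forallP hmax]; split.
    rewrite eqn_leq pI andTb leqNgt; apply/negP => h.
    have hj : (j.+1 < b)%N by apply: leq_trans h (lam_le_b _).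
    have := hmax (i, Ordinal hj); rewrite memI /= h /= => /negP; apply.
    by apply: ltP'; rewrite /grid_le /= ?leqnn ?leqnSn // ?ltnSn ?orbT ?ltnn //=.
  rewrite ltnNge; apply/negP => h.
  have hj : (j < lamn i.+1)%N by apply: leq_trans h.
  have hi : (i.+1 < a)%N.
    rewrite ltnNge; apply/negP => /lam_ge_a e; by rewrite e in hj.
  have := hmax (Ordinal hi, j); rewrite memI /= hj /= => /negP; apply.
  by apply: ltP'; rewrite /grid_le /= ?leqnn ?leqnSn ?ltnSn //=.
move=> [/eqP hj hlt]; split; first by rewrite memI /= -hj.
apply/forallP => -[y1 y2]; apply/implyP; rewrite memI /= => yI.
rewrite /lt_ /grid_le /=; apply/negP => /andP[neq /andP[h1 h2]].
have m1 := lam_mono _ _ h1.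
have ey2 : y2 = j :> nat.
  apply/eqP; rewrite eqn_leq h2 andbT -ltnS hj; exact: leq_trans yI m1.
case: (ltngtP i y1) => [iy|yi|ey1]; last first.
  have e1 : y1 = i by apply/val_inj; rewrite /= ey1.
  have e2 : y2 = j by apply/val_inj; rewrite /= ey2.
  by rewrite e1 e2 eqxx in neq.
  by rewrite ltnNge h1 in yi.
have := leq_trans yI (lam_mono _ _ iy); rewrite ey2 => h.
by have := leq_ltn_trans h hlt; rewrite -hj ltnn.
Qed.

Lemma TpE (p : gridP a b) :
  ((p \notin I) && [forall y, (y \notin I) ==> ~~ lt_ (@grid_le a b) y p])
  = ((p.2 == lamn p.1 :> nat) && (lamn p.1 < Lb p.1))%N.
Proof.
case: p => i j /=; apply/andP/andP.
  rewrite memI /= -leqNgt => -[pI /forallP hmin].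
  have ej : j = lamn i :> nat.
    apply/eqP; rewrite eqn_leq pI andbT leqNgt; apply/negP => h.
    have hj : (j.-1 < b)%N by apply: leq_ltn_trans (leq_pred _) (ltn_ord j).
    have j0 : (0 < j)%N by apply: leq_ltn_trans h.
    have := hmin (i, Ordinal hj); rewrite memI /= -leqNgt -ltnS prednK // h /= => /negP; apply.
    by apply: ltP'; rewrite /grid_le /= ?leqnn ?leq_pred // prednK // ?ltnSn ?orbT ?ltnn //=.
  split; first by rewrite ej.
  case: i ej pI hmin => [[|i'] hi] /= ej pI hmin; first by rewrite -ej.
  rewrite ltnNge; apply/negP => h.
  have hi' : (i' < a)%N by apply: ltnW.
  have := hmin (Ordinal hi', j); rewrite memI /= -leqNgt ej h /= => /negP; apply.
  by apply: ltP'; rewrite /grid_le /= ?leqnn ?leqnSn ?ltnSn //=.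
move=> [/eqP hj hlt]; split; first by rewrite memI /= hj ltnn.
apply/forallP => -[y1 y2]; apply/implyP; rewrite memI /= -leqNgt => yI.
rewrite /lt_ /grid_le /=; apply/negP => /andP[neq /andP[h1 h2]].
case: (ltngtP y1 i) => [iy|yi|ey1]; last first.
  have e1 : y1 = i by apply/val_inj; rewrite /= ey1.
  have ey2 : y2 = j :> nat by apply/eqP; rewrite eqn_leq h2 /= hj -e1 yI.
  have e2 : y2 = j by apply/val_inj; rewrite /= ey2.
  by rewrite e1 e2 eqxx in neq.
  by rewrite ltnNge h1 in yi.
move: hlt; case: (nat_of_ord i) iy hj => [//|i'] iy hj /= hlt.
have := lam_mono _ _ (iy : (y1 <= i')%N) => h.
have c : (lamn i' <= lamn i'.+1)%N by rewrite -hj; apply: leq_trans h (leq_trans yI h2).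
by rewrite leqNgt hlt in c.
Qed.

Lemma S1 (K : fieldType) (m : nat) (c : bool) (g : nat -> K) :
  (c -> 0 < m <= b)%N ->
  \sum_(j < b) ((j.+1 == m) && c)%:R * g j.+1 = c%:R * g m.
Proof.
case: c => [/(_ isT) /andP[m0 mb]|_]; last by rewrite mul0r big1 // => j _; rewrite andbF mul0r.
have hm : (m.-1 < b)%N by rewrite prednK.
rewrite mul1r (bigD1 (Ordinal hm)) //= prednK // eqxx mul1r big1 ?addr0 // => j hj.
rewrite andbT; case: eqP => [ej|]; last by rewrite mul0r.
by move/eqP: hj; case; apply: val_inj; rewrite /= -ej.
Qed.

Lemma S2 (K : fieldType) (m : nat) (c : bool) (g : nat -> K) :
  (c -> m < b)%N ->
  \sum_(j < b) ((j == m :> nat) && c)%:R * g j = c%:R * g m.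
Proof.
case: c => [/(_ isT) hm|_]; last by rewrite mul0r big1 // => j _; rewrite andbF mul0r.
rewrite mul1r (bigD1 (Ordinal hm)) //= eqxx mul1r big1 ?addr0 // => j hj.
rewrite andbT; case: eqP => [ej|]; last by rewrite mul0r.
by move/eqP: hj; case; apply: val_inj; rewrite /= -ej.
Qed.

Lemma XY (K : fieldType) (L : nat -> nat) (F G : nat -> K) k :
  (L k.+1 <= L k)%N ->
  (L k.+1 < L k)%N%:R * (F k + G (L k)) =
  (L k.+1 < L k)%N%:R * (F k + G (L k.+1)) + (G (L k) - G (L k.+1)).
Proof.
move=> h2; case: (ltnP (L k.+1) (L k)) => h1.
  rewrite !mul1r; ring.
have -> : L k.+1 = L k by apply/anti_leq; rewrite h1 h2.
by rewrite subrr addr0.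
Qed.

Lemma tele (K : fieldType) (L : nat -> nat) (F G : nat -> K) n :
 (forall k, L k.+1 <= L k)%N ->
 \sum_(0 <= i < n) ((L i.+2 < L i.+1)%N%:R * (F i.+1 + G (L i.+1))
                    - (L i.+1 < L i)%N%:R * (F i + G (L i.+1)))
 = G (L 0%N) - G (L n.+1) - (L 1 < L 0)%N%:R * (F 0%N + G (L 0%N))
   + (L n.+1 < L n)%N%:R * (F n + G (L n.+1)).
Proof.
move=> hL; elim: n => [|n IH].
  rewrite big_geq // (@XY _ L F G 0%N (hL 0%N)); ring.
rewrite big_nat_recr //= IH (@XY _ L F G n.+1 (hL n.+1)); ring.
Qed.

Lemma Lb_mono k : (Lb k.+1 <= Lb k)%N.
Proof. case: k => [|k] /=; [exact: lam_le_b | exact: lam_mono]. Qed.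

Lemma corner (K : fieldType) (F G : nat -> K) :
  F 0%N + G b = 0 -> F a + G 0%N = 0 ->
  \sum_(p : gridP a b) (Tminus (@grid_le a b) K p I * (F p.1.+1 + G p.2.+1)
     - Tplus (@grid_le a b) K p I * (F p.1 + G p.2)) = G b - G 0%N.
Proof.
move=> e0 ea.
rewrite /Tminus /Tplus.
under eq_bigr => p _ do rewrite TmE TpE.
rewrite -(pair_bigA _ (fun (i : 'I_a) (j : 'I_b) =>
   ((j.+1 == lamn i) && (lamn i.+1 < lamn i))%N%:R * (F i.+1 + G j.+1)
   - ((j == lamn i :> nat) && (lamn i < Lb i))%N%:R * (F i + G j))) /=.
have h (i : 'I_a) : \sum_(j < b) (((j.+1 == lamn i) && (lamn i.+1 < lamn i))%N%:R * (F i.+1 + G j.+1)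
   - ((j == lamn i :> nat) && (lamn i < Lb i))%N%:R * (F i + G j))
   = (Lb i.+2 < Lb i.+1)%N%:R * (F i.+1 + G (Lb i.+1))
     - (Lb i.+1 < Lb i)%N%:R * (F i + G (Lb i.+1)).
  rewrite sumrB (@S1 _ _ _ (fun k => F i.+1 + G k)); last first.
    move=> hc; rewrite lam_le_b andbT; exact: leq_ltn_trans hc.
  rewrite (@S2 _ _ _ (fun k => F i + G k)) //.
  move=> hc; apply: leq_trans hc _; case: (nat_of_ord i) => [|i'] /=; [exact: leqnn| exact: lam_le_b].
rewrite (eq_bigr _ (fun i _ => h i)) -(big_mkord xpredT (fun i =>
   (Lb i.+2 < Lb i.+1)%N%:R * (F i.+1 + G (Lb i.+1))
     - (Lb i.+1 < Lb i)%N%:R * (F i + G (Lb i.+1)))).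
rewrite tele; last exact: Lb_mono.
rewrite /= lam_ge_a // e0 ea !mulr0 subr0 addr0.
done.
Qed.
End Comb.

Section Main.
Variable R : realType.
Local Notation x := (qvar R).
Local Notation qi := (qint R).

Lemma qS n : qi n.+1 = 1 + x * qi n.
Proof.
rewrite /qint big_ord_recl expr0 mulr_sumr; congr (_ + _).
by apply: eq_bigr => i _; rewrite exprS.
Qed.

Lemma qD m n : qi (m + n) = qi m + x ^+ m * qi n.
Proof.
rewrite /qint big_split_ord mulr_sumr; congr (_ + _).
by apply: eq_bigr => i _; rewrite exprD.
Qed.

Lemma q0 : qi 0 = 0.
Proof. by rewrite /qint big_ord0. Qed.

Lemma xpow m : x ^+ m = 1 + x * qi m - qi m.
Proof.
have := qD m 1; rewrite addn1 qS /qint big_ord1 expr0 mulr1 => ->; ring.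
Qed.

Lemma qi_neq0 m : (0 < m)%N -> qi m != 0.
Proof.
move=> m0; rewrite /qint /qvar.
rewrite (_ : \sum_(i < m) (tofrac 'X) ^+ i = tofrac (\sum_(i < m) ('X : {poly R}) ^+ i)); last first.
  by rewrite rmorph_sum; apply: eq_bigr => i _; rewrite rmorphXn.
rewrite tofrac_eq0; apply/negP => /eqP h.
have := congr1 (fun p : {poly R} => p.[1]) h.
rewrite /= horner0 horner_sum.
under eq_bigr => i _ do rewrite hornerXn expr1n.
by rewrite sumr_const card_ord; apply/eqP; rewrite pnatr_eq0 -lt0n.
Qed.
End Main.

Theorem theorem5p11 (R : realType) (a b : nat) (ha : (1 <= a)%N) (hb : (1 <= b)%N) :
  qequiv (@grid_le a b) (qvar R)
    (fun I => \sum_(p : gridP a b) Tminus (@grid_le a b) (ratfun R) p I)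
    (fun _ => qint R a * qint R b / qint R (a + b)).
Proof.
set D := qint R (a + b).
have hD : D != 0 by apply: qi_neq0; rewrite addn_gt0 ha.
pose d (p : gridP a b) := qint R p.1 * qint R b + qint R p.2 * qint R a - qint R a * qint R b.
exists (fun p => d p / D) => I hI.
pose F i := qint R i * qint R b.
pose G j := qint R j * qint R a - qint R a * qint R b.
have key : \sum_(p : gridP a b) (Tminus (@grid_le a b) (ratfun R) p I * D
     - d p * Tq (@grid_le a b) (qvar R) p I) = qint R a * qint R b.
  transitivity (\sum_(p : gridP a b) (Tminus (@grid_le a b) (ratfun R) p I * (F p.1.+1 + G p.2.+1)
     - Tplus (@grid_le a b) (ratfun R) p I * (F p.1 + G p.2))).
    apply: eq_bigr => p _; rewrite /Tq /d /F /G /D.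
    move: (Tminus _ _ p I) (Tplus _ _ p I) => tm tp.
    rewrite (qS R p.1) (qS R p.2) (qD R a b) (xpow R a).
    move: (qint R p.1) (qint R p.2) (qint R a) (qint R b) (qvar R) => u v w z y; ring.
  rewrite (@corner a b I hI _ F G); first by rewrite /G (q0 R); move: (qint R a) (qint R b) => w z; ring.
    by rewrite /F /G (q0 R); move: (qint R a) (qint R b) => w z; ring.
  by rewrite /F /G (q0 R); move: (qint R a) (qint R b) => w z; ring.
have -> : \sum_(p : gridP a b) d p / D * Tq (@grid_le a b) (qvar R) p I
   = (\sum_(p : gridP a b) d p * Tq (@grid_le a b) (qvar R) p I) / D.
  rewrite mulr_suml; apply: eq_bigr => p _; rewrite mulrAC.
  done.
rewrite -key sumrB -mulr_suml.
move: (\sum_(p : gridP a b) _) (\sum_(p : gridP a b) _) => s1 s2.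
by rewrite mulrBl mulfK // opprB addrC subrK.
Qed.
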